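(* Let $\hat K_4$ denote $K_4$ with one edge deleted, and let $Q = K_1 + \hat K_4 + C_5 + C_5 + C_5 + C_5$ (Zykov sum of a single vertex, $\hat K_4$, and four disjoint $5$-cycles). Let $w$ be the vertex of $K_1$ and let $a,b$ be the two non-adjacent vertices of $\hat K_4$. Consider a coloring of the edges of $Q$ in three colors such that the set of edges joining $w$ to the vertices of $\hat K_4$ contains edges of all three colors, and the edges $wa$ and $wb$ have different colors. Then there is a monochromatic triangle in this coloring.
   Context: All graphs are finite, undirected, without loops or multiple edges. The Zykov sum $G_1+G_2$ of two vertex-disjoint graphs is obtained by joining every vertex of $G_1$ to every vertex of $G_2$. *)

(* Defs.v *)
From mathcomp Require Import all_boot.
Set Implicit Arguments. Unset Strict Implicit. Unset Printing Implicit Defensive.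

Definition khat4_adj (i j : 'I_4) : bool :=
  (i != j) && ~~ (((val i == 0) && (val j == 1)) || ((val i == 1) && (val j == 0))).

Definition c5_adj (i j : 'I_5) : bool :=
  (val j == (val i).+1 %% 5) || (val i == (val j).+1 %% 5).

Inductive QV : Type :=
  | W
  | Kv of 'I_4
  | Cv of 'I_4 & 'I_5.

(* Adjacency in the Zykov sum: vertices in different summands are adjacent;
   within a summand, the summand's own adjacency is used. *)
Definition Q_adj (x y : QV) : bool :=
  match x, y with
  | W, W => false
  | Kv i, Kv j => khat4_adj i j
  | Cv j k, Cv j' k' => if j == j' then c5_adj k k' else true
  | _, _ => true
  end.

Definition vert_a : 'I_4 := @Ordinal 4 0 isT.
Definition vert_b : 'I_4 := @Ordinal 4 1 isT.

(* Main.v *)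
Require Import Defs.
From mathcomp Require Import all_boot.
From mathcomp Require Import zify.
From Stdlib Require Import Classical FunctionalExtensionality.
From HB Require Import structures.


Definition qenc (x : QV) : option ('I_4 + 'I_4 * 'I_5) :=
  match x with W => None | Kv i => Some (inl i) | Cv j k => Some (inr (j, k)) end.
Definition qdec (y : option ('I_4 + 'I_4 * 'I_5)) : QV :=
  match y with None => W | Some (inl i) => Kv i | Some (inr (j, k)) => Cv j k end.
Lemma qK : cancel qenc qdec. Proof. by case. Qed.
HB.instance Definition _ := Equality.copy QV (can_type qK).

Section Chk.
Variable n : nat.
Variable adj : nat -> nat -> bool.
Definition Ed : seq (nat * nat) :=
  [seq p <- [seq (u, v) | u <- iota 0 n, v <- iota 0 n] | (p.1 < p.2) && adj p.1 p.2].
Definition Tr : seq (nat * nat * nat) :=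
  [seq t <- flatten [seq [seq (p, w) | w <- iota 0 n] | p <- [seq (u, v) | u <- iota 0 n, v <- iota 0 n]] |
     let: (u, v, w) := t in [&& u < v, v < w, adj u v, adj v w & adj u w]].
Definition TrI : seq (nat * nat * nat) :=
  [seq (index (t.1.1, t.1.2) Ed, index (t.1.2, t.2) Ed, index (t.1.1, t.2) Ed) | t <- Tr].
End Chk.
Definition monob (T : seq (nat * nat * nat)) (bits : seq bool) : bool :=
  has (fun t => let: (a, b, c) := t in
         [&& a < size bits, b < size bits, c < size bits,
             nth false bits a == nth false bits b &
             nth false bits b == nth false bits c]) T.
Fixpoint search T (k : nat) (bits : seq bool) : bool :=
  if monob T bits then true else
  match k with 0 => false | k'.+1 => search T k' (rcons bits true) && search T k' (rcons bits false) end.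
Definition check n adj := search (TrI n adj) (size (Ed n adj)) [::].

Lemma monob_mono T bits ext : monob T bits -> monob T (bits ++ ext).
Proof.
apply: sub_has => -[[a b] c'] /= /and5P[ha hb hc e1 e2].
by rewrite size_cat !nth_cat ha hb hc e1 e2 (ltn_addr _ ha) (ltn_addr _ hb) (ltn_addr _ hc).
Qed.

Lemma search_sound T k bits : search T k bits ->
  forall ext, size ext = k -> monob T (bits ++ ext).
Proof.
elim: k bits => [|k IH] bits /=.
  case: ifP => [Hm _ ext _|//]; exact: monob_mono.
case: ifP => [Hm _ ext _|_ /andP[H1 H2] [|b ext] //= [Hs]]; first exact: monob_mono.
by case: b; rewrite -cat_rcons; [apply: IH H1 _ _ | apply: IH H2 _ _].
Qed.

Lemma arrow n adj (f : nat -> nat -> bool) : check n adj ->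
  exists u v w, [/\ u < v, v < w, w < n &
     [/\ adj u v, adj v w, adj u w, f u v = f v w & f v w = f u w]].
Proof.
move=> H.
have := @search_sound _ _ _ H [seq f p.1 p.2 | p <- Ed n adj].
rewrite size_map => /(_ erefl) /=.
move/hasP => [[[a b] c'] /mapP [t tin [-> -> ->]]] /and5P[_ _ _ e1 e2].
move: tin e1 e2; rewrite mem_filter; case: t => [[u v] w] /= /andP[/and5P[uv vw a1 a2 a3]].
move=> /flattenP[s /mapP[p /allpairsP[[u' v'] [ui vi ->]] ->] /mapP[w' wi [eu ev ew]]].
subst u v w.
move: ui vi wi; rewrite /= !mem_iota /= => _ vn wn e1 e2.
have inE' : forall x y, x < y -> y < n -> adj x y -> (x, y) \in Ed n adj.
  move=> x y xy yn axy; rewrite mem_filter /= xy axy /=.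
  by apply: (allpairs_f (fun u v => (u, v))); rewrite mem_iota add0n ?(ltn_trans xy yn).
have nthE : forall x y, x < y -> y < n -> adj x y ->
    nth false [seq f p.1 p.2 | p <- Ed n adj] (index (x, y) (Ed n adj)) = f x y.
  move=> x y xy yn axy; have Hin := inE' x y xy yn axy.
  by rewrite (nth_map (0, 0)) ?index_mem // nth_index.
have uw := ltn_trans uv vw; have vn' := ltn_trans vw wn.
move: e1 e2; rewrite /= !nthE // => /eqP e1 /eqP e2.
by exists u', v', w'; split.
Qed.

Definition c5n (a b : nat) := (b == a.+1 %% 5) || (a == b.+1 %% 5).
Definition gadj (u v : nat) := (u != v) && [|| u < 3, v < 3 | c5n (u - 3) (v - 3)].
Definition kadj (u v : nat) := u != v.
Lemma ck6 : check 6 kadj. Proof. by vm_compute. Qed.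
Lemma ckg : check 8 gadj. Proof. by vm_compute. Qed.

Definition e3 : seq 'I_3 := [:: @Ordinal 3 0 isT; @Ordinal 3 1 isT; @Ordinal 3 2 isT].
Lemma mem_e3 (x : 'I_3) : x \in e3.
Proof. by case: x => [[|[|[|?]]] Hk]. Qed.

Lemma col3 (a b i : 'I_3) : a != i -> b != i -> (a == ordS i) = (b == ordS i) -> a = b.
Proof.
have H : all (fun a => all (fun b => all (fun i =>
   (a != i) ==> (b != i) ==> ((a == ordS i) == (b == ordS i)) ==> (a == b)) e3) e3) e3.
  by vm_compute.
move=> ha hb hab; apply/eqP.
move/allP/(_ a (mem_e3 a))/allP/(_ b (mem_e3 b))/allP/(_ i (mem_e3 i)): H.
by rewrite ha hb hab eqxx.
Qed.

Definition goalP (c : QV -> QV -> 'I_3) := exists x y z : QV,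
    [/\ Q_adj x y, Q_adj y z, Q_adj x z, c x y = c y z & c y z = c x z].

Lemma QadjW x : x != W -> Q_adj W x.
Proof. by case: x. Qed.

Lemma embed (c : QV -> QV -> 'I_3) (c_sym : forall x y, c x y = c y x)
  n adj (Hc : check n adj) (g : nat -> QV) (i : 'I_3)
  (Hadj : forall u v, u < v -> v < n -> adj u v -> Q_adj (g u) (g v))
  (Hcol : forall u, u < n -> c W (g u) = i)
  (HW : forall u, u < n -> g u != W) : goalP c.
Proof.
case: (classic (exists u v, [/\ u < v, v < n, adj u v & c (g u) (g v) = i])).
  move=> [u [v [uv vn a e]]]; have un := ltn_trans uv vn.
  exists W, (g u), (g v); split; rewrite ?QadjW ?HW ?Hadj //.
    by rewrite Hcol.
  by rewrite Hcol.
move=> Hno.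
have [u [v [w [uv vw wn [a1 a2 a3 e1 e2]]]]] :=
  @arrow n adj (fun u v => c (g u) (g v) == ordS i) Hc.
have vn := ltn_trans vw wn; have un := ltn_trans uv vn; have uw := ltn_trans uv vw.
have ne : forall x y, x < y -> y < n -> adj x y -> c (g x) (g y) != i.
  by move=> x y xy yn axy; apply/eqP => E; apply: Hno; exists x, y.
exists (g u), (g v), (g w); split; rewrite ?Hadj //.
  exact: (@col3 _ _ i (ne u v uv vn a1) (ne v w vw wn a2) e1).
exact: (@col3 _ _ i (ne v w vw wn a2) (ne u w uw wn a3) e2).
Qed.


Lemma R6 (c : QV -> QV -> 'I_3) (c_sym : forall x y, c x y = c y x) i (L : seq QV) :
  pairwise Q_adj L -> all (fun x => c W x == i) L -> W \notin L -> 6 <= size L -> goalP c.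
Proof.
move=> HP HA HW HS.
move/(pairwiseP W): HP => HP.
apply: (@embed c c_sym 6 kadj ck6 (fun u => nth W L u) i).
- move=> u v uv vn _; apply: HP => //.
    by rewrite unfold_in /=; lia.
  by rewrite unfold_in /=; lia.
- move=> u un; apply/eqP; move/(all_nthP W): HA; apply; lia.
- move=> u un; apply: contraNneq HW => <-; exact: mem_nth (leq_trans un HS).
Qed.

Lemma Gr (c : QV -> QV -> 'I_3) (c_sym : forall x y, c x y = c y x) i (L : seq QV) t :
  pairwise Q_adj L -> all (fun x => c W x == i) L -> W \notin L -> 3 <= size L ->
  (forall x, x \in L -> forall k, Q_adj x (Cv t k)) ->
  (forall k, c W (Cv t k) = i) -> goalP c.
Proof.
move=> HP HA HW HS HL HC.
move/(pairwiseP W): HP => HP.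
apply: (@embed c c_sym 8 gadj ckg
   (fun u => if u < 3 then nth W L u else Cv t (inord (u - 3))) i).
- move=> u v uv vn; rewrite /gadj => /andP[_ H].
  case: (ltnP u 3) => hu; case: (ltnP v 3) => hv.
  + apply: HP => //; rewrite unfold_in /=; lia.
  + apply: HL; exact: mem_nth (leq_trans hu HS).
  + lia.
  + have hu' : (u < 3) = false by rewrite ltnNge hu.
    have hv' : (v < 3) = false by rewrite ltnNge hv.
    move: H; rewrite /= eqxx /c5_adj /c5n hu' hv' /= !inordK //; lia.
- move=> u un; case: ifP => hu.
    by apply/eqP; move/(all_nthP W): HA; apply; exact: leq_trans hu HS.
  exact: HC.
- move=> u un; case: ifP => hu //.
  apply: contraNneq HW => <-; exact: mem_nth (leq_trans hu HS).
Qed.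


Definition o0 : 'I_4 := @Ordinal 4 0 isT.
Definition o1 : 'I_4 := @Ordinal 4 1 isT.
Definition o2 : 'I_4 := @Ordinal 4 2 isT.
Definition o3 : 'I_4 := @Ordinal 4 3 isT.
Definition e4 : seq 'I_4 := [:: o0; o1; o2; o3].
Lemma mem_e4 (x : 'I_4) : x \in e4.
Proof. by case: x => [[|[|[|[|?]]]] Hk]. Qed.
Definition e5 : seq 'I_5 := [:: @Ordinal 5 0 isT; @Ordinal 5 1 isT; @Ordinal 5 2 isT; @Ordinal 5 3 isT; @Ordinal 5 4 isT].
Lemma mem_e5 (x : 'I_5) : x \in e5.
Proof. by case: x => [[|[|[|[|[|?]]]]] Hk]. Qed.
Definition c0 : 'I_3 := @Ordinal 3 0 isT.
Definition c1 : 'I_3 := @Ordinal 3 1 isT.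
Definition c2 : 'I_3 := @Ordinal 3 2 isT.

Definition clF (f : 'I_5 -> 'I_3) (i : 'I_3) : seq 'I_5 :=
  match ohead [seq k <- e5 | (f k == i) && (f (ordS k) == i)] with
  | Some k => [:: k; ordS k]
  | None => match ohead [seq k <- e5 | f k == i] with Some k => [:: k] | None => [::] end end.

Definition tab5 (xs : seq 'I_3) (k : 'I_5) : 'I_3 := nth c0 xs k.

Lemma A5P (Q : ('I_5 -> 'I_3) -> bool) :
  all (fun x0 => all (fun x1 => all (fun x2 => all (fun x3 => all (fun x4 =>
    Q (tab5 [:: x0; x1; x2; x3; x4])) e3) e3) e3) e3) e3 -> forall f, Q f.
Proof.
move=> H f.
have -> : f = tab5 [seq f k | k <- e5].
  apply: functional_extensionality => k.
  case: k => [[|[|[|[|[|?]]]]] Hk] //=; rewrite /tab5 /=; congr f; exact: val_inj.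
rewrite /=.
move/allP/(_ (f (@Ordinal 5 0 isT)) (mem_e3 _)): H.
move/allP/(_ (f (@Ordinal 5 1 isT)) (mem_e3 _)).
move/allP/(_ (f (@Ordinal 5 2 isT)) (mem_e3 _)).
move/allP/(_ (f (@Ordinal 5 3 isT)) (mem_e3 _)).
by move/allP/(_ (f (@Ordinal 5 4 isT)) (mem_e3 _)).
Qed.

Lemma F_cl f i : all (fun k => f k == i) (clF f i) && pairwise c5_adj (clF f i).
Proof.
have H : forall f, all (fun i => all (fun k => f k == i) (clF f i) && pairwise c5_adj (clF f i)) e3.
  by apply: A5P; vm_compute.
by move/allP: (H f) => /(_ i (mem_e3 i)).
Qed.

Lemma F_sum f : (3 <= size (clF f c0) + size (clF f c1) + size (clF f c2)) ||
   has (fun i => all (fun k => f k == i) e5 && (size (clF f i) == 2)) e3.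
Proof. by move: f; apply: A5P; vm_compute. Qed.

Section Parts.
Variable col : QV -> 'I_3.
Definition kl (i : 'I_3) : seq QV := map Kv [seq v <- e4 | col (Kv v) == i].
Definition cl (t : 'I_4) (i : 'I_3) : seq QV := map (Cv t) (clF (fun k => col (Cv t k)) i).
Definition LL (ts : seq 'I_4) (i : 'I_3) : seq QV := kl i ++ flatten [seq cl t i | t <- ts].
End Parts.
Arguments kl : simpl never.
Arguments cl : simpl never.

Lemma cl_pair col t i : pairwise Q_adj (cl col t i).
Proof.
rewrite /cl pairwise_map; apply: sub_pairwise (proj2 (andP (F_cl _ i))).
by move=> x y /= h; rewrite eqxx.
Qed.

Lemma cl_col col t i : all (fun x => col x == i) (cl col t i).
Proof. by rewrite /cl all_map; exact: (proj1 (andP (F_cl _ i))). Qed.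

Lemma kl_col col i : all (fun x => col x == i) (kl col i).
Proof. by rewrite /kl all_map; apply/allP => v; rewrite mem_filter => /andP[]. Qed.

Lemma kl_pair col i : col (Kv vert_a) != col (Kv vert_b) -> pairwise Q_adj (kl col i).
Proof.
move=> hab; rewrite /kl pairwise_map.
have G : forall b0 b1 b2 b3 : bool, ~~ (b0 && b1) ->
  pairwise (relpre Kv Q_adj) (filter (fun v : 'I_4 => nth false [:: b0; b1; b2; b3] v) e4).
  by do 4 case.
have -> : [seq v <- e4 | col (Kv v) == i] =
   filter (fun v : 'I_4 => nth false [:: col (Kv o0) == i; col (Kv o1) == i; col (Kv o2) == i; col (Kv o3) == i] v) e4.
  apply: eq_filter => v; case: v => [[|[|[|[|?]]]] Hk] //=; congr (col (Kv _) == i); exact: val_inj.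
apply: G; apply/negP => /andP[/eqP h1 /eqP h2]; move/eqP: hab; apply.
by rewrite h1 h2.
Qed.

Lemma LL_mem col ts i x : x \in LL col ts i ->
  (exists v, x = Kv v) \/ (exists t k, t \in ts /\ x = Cv t k).
Proof.
rewrite /LL mem_cat => /orP[|/flattenP[s /mapP[t tin ->]]].
  by rewrite /kl => /mapP[v _ ->]; left; exists v.
by rewrite /cl => /mapP[k _ ->]; right; exists t, k.
Qed.

Lemma LL_W col ts i : W \notin LL col ts i.
Proof. by apply/negP => /LL_mem [[v]|[t [k [_]]]]. Qed.

Lemma LL_col col ts i : all (fun x => col x == i) (LL col ts i).
Proof.
rewrite /LL all_cat kl_col /=; apply/allP => x /flattenP[s /mapP[t _ ->]].
by move/allP: (cl_col col t i); apply.
Qed.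

Lemma LL_adj col ts i t : t \notin ts -> forall x, x \in LL col ts i -> forall k, Q_adj x (Cv t k).
Proof.
move=> tn x /LL_mem [[v ->]|[t' [k' [tin ->]]]] k //=.
by case: eqP => // E; move: tn; rewrite -E tin.
Qed.

Lemma flat_pair col ts i : uniq ts -> pairwise Q_adj (flatten [seq cl col t i | t <- ts]).
Proof.
elim: ts => //= t ts IH /andP[tn u]; rewrite pairwise_cat cl_pair (IH u) andbT.
apply/andP; split => //; apply/allrelP => x y; rewrite /cl => /mapP[k _ ->] /flattenP[s /mapP[t' t'in ->]] /mapP[k' _ ->] /=.
by case: eqP => // E; move: tn; rewrite E t'in.
Qed.

Lemma LL_pair col ts i : col (Kv vert_a) != col (Kv vert_b) -> uniq ts -> pairwise Q_adj (LL col ts i).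
Proof.
move=> hab u; rewrite /LL pairwise_cat (kl_pair _ _ hab) (flat_pair _ _ _ u); apply/andP; split => //.
apply/allrelP => x y; rewrite /kl => /mapP[v _ ->] /flattenP[s /mapP[t' _ ->]].
by rewrite /cl => /mapP[k _ ->].
Qed.

Lemma LL_size col ts i : size (LL col ts i) = size (kl col i) + sumn [seq size (cl col t i) | t <- ts].
Proof. by rewrite /LL size_cat size_flatten /shape -map_comp. Qed.

Lemma count3 (T : Type) (f : T -> 'I_3) s :
  count (fun x => f x == c0) s + count (fun x => f x == c1) s + count (fun x => f x == c2) s = size s.
Proof.
elim: s => //= x s IH; case: (f x) => [[|[|[|m]]] Hm] //=; lia.
Qed.

Lemma kl_sum col : size (kl col c0) + size (kl col c1) + size (kl col c2) = 4.
Proof. by rewrite /kl !size_map !size_filter count3. Qed.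

Lemma kl_pos col i : (exists v, col (Kv v) = i) -> 0 < size (kl col i).
Proof.
move=> [v hv]; rewrite /kl size_map size_filter -has_count; apply/hasP.
by exists v; [exact: mem_e4 | apply/eqP].
Qed.

Lemma per_t col t : 3 <= size (cl col t c0) + size (cl col t c1) + size (cl col t c2) \/
  exists2 i, (forall k, col (Cv t k) = i) & size (cl col t i) = 2.
Proof.
rewrite /cl !size_map.
case/orP: (F_sum (fun k => col (Cv t k))) => [h|/hasP[i _ /andP[/allP H /eqP E]]]; first by left.
by right; exists i; [move=> k; apply/eqP; apply: H; exact: mem_e5 | rewrite size_map].
Qed.


Theorem lemma3 (c : QV -> QV -> 'I_3)
  (c_sym : forall x y, c x y = c y x)
  (h_all : forall col : 'I_3, exists v : 'I_4, c W (Kv v) = col)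
  (h_ab : c W (Kv vert_a) <> c W (Kv vert_b)) :
  exists x y z : QV,
    [/\ Q_adj x y, Q_adj y z, Q_adj x z, c x y = c y z & c y z = c x z].
Proof.
apply: NNPP => Hno.
pose col := c W.
have hab : col (Kv vert_a) != col (Kv vert_b) by apply/eqP.
have B6 : forall i, size (LL col e4 i) <= 5.
  move=> i; rewrite leqNgt; apply/negP => H; apply: Hno.
  apply: (@R6 c c_sym i (LL col e4 i)) => //.
  - exact: LL_pair.
  - exact: LL_col.
  - exact: LL_W.
have BG : forall t i ts, uniq ts -> t \notin ts -> (forall k, col (Cv t k) = i) ->
    size (LL col ts i) <= 2.
  move=> t i ts u tn Hf; rewrite leqNgt; apply/negP => H; apply: Hno.
  apply: (@Gr c c_sym i (LL col ts i) t) => //.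
  - exact: LL_pair.
  - exact: LL_col.
  - exact: LL_W.
  - exact: LL_adj.
have PT : forall t ts, uniq ts -> t \notin ts ->
    3 <= size (cl col t c0) + size (cl col t c1) + size (cl col t c2) \/
    (size (cl col t c0) = 2 /\ size (LL col ts c0) <= 2) \/
    (size (cl col t c1) = 2 /\ size (LL col ts c1) <= 2) \/
    (size (cl col t c2) = 2 /\ size (LL col ts c2) <= 2).
  move=> t ts u tn; case: (per_t col t) => [h|[i Hf Hs]]; first by left.
  right; have := mem_e3 i; rewrite !inE => /or3P[/eqP Ei|/eqP Ei|/eqP Ei]; subst i.
  - by left; split => //; apply: BG Hf.
  - by right; left; split => //; apply: BG Hf.
  - by right; right; split => //; apply: BG Hf.
have P0 := PT o0 [:: o1; o2; o3] isT isT.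
have P1 := PT o1 [:: o0; o2; o3] isT isT.
have P2 := PT o2 [:: o0; o1; o3] isT isT.
have P3 := PT o3 [:: o0; o1; o2] isT isT.
have K := kl_sum col.
have K0 := @kl_pos col c0 (h_all c0).
have K1 := @kl_pos col c1 (h_all c1).
have K2 := @kl_pos col c2 (h_all c2).
have B0 := B6 c0; have B1 := B6 c1; have B2 := B6 c2.
move: P0 P1 P2 P3 B0 B1 B2; rewrite !LL_size /=.
lia.
Qed.
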